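(* Let $\mathcal Z$ be a set, $\mathcal H\subseteq\{0,1\}^{\mathcal Z}$, $h^\star\in\mathcal H$, and $\mathcal D$ a distribution on $\mathcal Z$ with $p:=\Pr_{Z\sim\mathcal D}(h^\star(Z)=1)>0$. Then for costs $c_{\mathrm{rew}},c_{\mathrm{ver}}>0$, \[ J^\star(h^\star,\mathcal D)=\frac{c_{\mathrm{rew}}}{p}+c_{\mathrm{ver}}. \]
   Context: Binary active search: a policy keeps a pool of generated unverified points and at each step, as a (possibly randomized) function of its history, either generates a fresh $Z\sim\mathcal D$ (cost $c_{\mathrm{rew}}$, $Z$ observed, added to the pool) or verifies a pool point $Z$ (cost $c_{\mathrm{ver}}$, observes $h^\star(Z)$, removes $Z$; stops and outputs $Z$ if the label is $1$). It is sound if it stops only upon observing label $1$. The cost is $c_{\mathrm{rew}}N_{\mathrm{rew}}+c_{\mathrm{ver}}N_{\mathrm{ver}}$, $+\infty$ if no positive is observed. $J^\star(h^\star,\mathcal D)$ is the infimum of expected cost over all such policies that know $(h^\star,\mathcal D)$. *)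

(* Defs.v *)
From HB Require Import structures.
From mathcomp Require Import all_boot all_order all_algebra.
From mathcomp Require Import all_classical all_reals all_analysis.

Set Implicit Arguments.
Unset Strict Implicit.
Unset Printing Implicit Defensive.

Import Order.TTheory GRing.Theory Num.Theory.
Local Open Scope classical_set_scope.
Local Open Scope ring_scope.

(** A history is the sequence of observations made so far:
  - [EGen z] : a fresh point [z] was generated (and observed);
  - [EVer i b] : the [i]-th point of the current pool was verified, and
    the label [b] was observed (the point is removed from the pool). *)

Inductive event (Z : Type) :=
| EGen of Z
| EVer of nat & bool.
Arguments EGen {Z}.
Arguments EVer {Z}.

Definition pool_step (Z : Type) (pl : seq Z) (e : event Z) : seq Z :=
  match e with
  | EGen z => rcons pl z
  | EVer i _ => take i pl ++ drop i.+1 pl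
  end.

Definition pool (Z : Type) (h : seq (event Z)) : seq Z := foldl (@pool_step Z) [::] h.

(** A (possibly randomized, behavioural) policy maps each history to a
  probability distribution on the available actions, encoded by weights
  [pol h : nat -> R]: weight [pol h 0] is the probability of generating a
  fresh point, weight [pol h i.+1] the probability of verifying the [i]-th
  pool point ([i < size (pool h)]). *)
Definition policy (Z : Type) (R : realType) := seq (event Z) -> nat -> R.

Definition valid_policy (Z : Type) (R : realType) (pol : policy Z R) : Prop :=
  forall h : seq (event Z),
    (forall i, 0 <= pol h i) /\
    (forall i, (size (pool h) < i)%N -> pol h i = 0) /\
    \sum_(i < (size (pool h)).+1) pol h i = 1.

Section Cost.
Context (d : measure_display) (Z : measurableType d) (R : realType).
Context (D : probability Z R) (hstar : Z -> bool) (c_rew c_ver : R).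
Local Open Scope ereal_scope.

Definition pool_label (h : seq (event Z)) (j : nat) : bool :=
  if drop j (pool h) is z :: _ then hstar z else false.

(** [cost_upto pol n h] : expected cost accumulated during the next [n]
  steps of the policy started from history [h] (the process stops as soon
  as a label [1] is observed; the fresh point is drawn from [D]). *)
Fixpoint cost_upto (pol : policy Z R) (n : nat) (h : seq (event Z)) {struct n}
  : \bar R :=
  match n with
  | 0 => 0
  | n'.+1 =>
    \sum_(i < (size (pool h)).+1)
      (pol h i)%:E *
      (if (i == 0%N :> nat) then
         c_rew%:E + \int[D]_z cost_upto pol n' (rcons h (EGen z))
       else
         let j := (i.-1)%N in
         if pool_label h j then c_ver%:E
         else c_ver%:E + cost_upto pol n' (rcons h (EVer j false)))
  end.

(** Expected total cost [E[c_rew N_rew + c_ver N_ver]] (which is [+oo] on the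
  event that no positive is ever observed): by monotone convergence it is
  the supremum of the expected costs accumulated in the first [n] steps. *)
Definition expected_cost (pol : policy Z R) : \bar R :=
  ereal_sup (range (fun n => cost_upto pol n [::])).

Definition Jstar : \bar R :=
  ereal_inf [set expected_cost pol | pol in [set pol | valid_policy pol]].

End Cost.

(* Main.v *)
Require Import Defs.
From HB Require Import structures.
From mathcomp Require Import all_boot all_order all_algebra.
From mathcomp Require Import all_classical all_reals all_analysis.
From mathcomp Require Import measurable_realfun.
From mathcomp Require Import lra ring.

Import Order.TTheory GRing.Theory Num.Theory.
Local Open Scope classical_set_scope.
Local Open Scope ring_scope.

Section Aux.
Context (d : measure_display) (Z : measurableType d) (R : realType).
Context (D : probability Z R) (hstar : Z -> bool).
Hypothesis mA : measurable [set z | hstar z].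
Variable p : R.
Hypothesis Dp : D [set z | hstar z] = p%:E.
Local Open Scope ereal_scope.

Lemma int_mono (f g : Z -> \bar R) : (forall z, 0 <= f z) -> (forall z, f z <= g z) ->
  \int[D]_z f z <= \int[D]_z g z.
Proof.
move=> f0 fg.
have g0 z : 0 <= g z by apply: le_trans (f0 z) (fg z).
rewrite !ge0_integralTE //.
apply: le_ereal_sup => _ [h /= hf <-]; exists h => //= x.
exact: le_trans (hf x) (fg x).
Qed.

Lemma int_if (a b : R) :
  \int[D]_z (if hstar z then a else b)%:E = (a * p + b * (1 - p))%:E.
Proof.
have mf : measurable_fun [set: Z] (fun z : Z => ((if hstar z then a else b)%:E : \bar R)).
  apply/measurable_EFinP; apply: measurable_fun_ifT => //.
  apply: (measurable_fun_bool true).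
  by rewrite setTI (_ : _ @^-1` _ = [set z | hstar z]).
rewrite -(setUv [set z | hstar z]) integral_setU //; last first.
- by rewrite disj_set2E setICr.
- by rewrite setUv.
- exact: measurableC.
rewrite (@eq_integral _ _ _ _ [set z | hstar z] (cst a%:E)); last first.
  by move=> z; rewrite inE /= => ->.
rewrite (@eq_integral _ _ _ _ (~` [set z | hstar z]) (cst b%:E)); last first.
  by move=> z; rewrite inE /= => /negP/negbTE ->.
rewrite !integral_cst //; last exact: measurableC.
have hC : (D : {measure set Z -> \bar R}) (~` [set z | hstar z]) = (1 - p)%:E.
  by rewrite EFinB -Dp; exact: probability_setC.
have hA : (D : {measure set Z -> \bar R}) ([set z | hstar z]) = p%:E by exact: Dp.
rewrite hC hA.
by rewrite -!EFinM -EFinD.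
Qed.
End Aux.

Lemma small_pow (R : realType) (r e : R) : 0 <= r -> r < 1 -> 0 < e -> exists n, r ^+ n < e.
Proof.
move=> r0 r1 e0.
have hr : `|r| < 1 by rewrite ger0_norm.
have [N _ HN] := (cvgrPdist_lt _ _).1 (cvg_expr hr) e e0.
exists N; have := HN N (leqnn N) => /=.
by rewrite sub0r normrN ger0_norm ?exprn_ge0.
Qed.

Lemma drop_find (T : Type) (a : pred T) (s : seq T) : has a s ->
  (if drop (find a s) s is z :: _ then a z else false) = true.
Proof.
elim: s => //= x s IH; case: ifP => ax /=; first by rewrite ax.
by move=> /IH.
Qed.

Lemma pool_rcons (Z : Type) (h : seq (event Z)) e :
  pool (rcons h e) = pool_step (pool h) e.
Proof. by rewrite /pool foldl_rcons. Qed.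

Lemma esum_single (R : realType) (n k : nat) (F : 'I_n -> \bar R) (hk : (k < n)%N) :
  (\sum_(i < n) ((i == k :> nat)%:R)%:E * F i)%E = F (Ordinal hk).
Proof.
rewrite (bigD1 (Ordinal hk)) //= eqxx mul1e big1 ?adde0 //.
move=> i /negPf hi; suff -> : (i == k :> nat) = false by rewrite mul0e.
by apply/negbTE; apply: contraFN hi => /eqP hik; apply/eqP/val_inj.
Qed.

Lemma rsum_single (R : realType) (n k : nat) : (k < n)%N ->
  \sum_(i < n) ((i == k :> nat)%:R : R) = 1.
Proof.
move=> hk; rewrite (bigD1 (Ordinal hk)) //= eqxx big1 ?addr0 //.
move=> i /negPf hi; suff -> : (i == k :> nat) = false by [].
by apply/negbTE; apply: contraFN hi => /eqP hik; apply/eqP/val_inj.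
Qed.

Lemma sum_lb (R : realType) (k : nat) (w : nat -> R) (F : 'I_k -> \bar R) (x : R) :
  (forall i, 0 <= w i) -> \sum_(i < k) w i = 1 ->
  (forall i, x%:E <= F i)%E ->
  (x%:E <= \sum_(i < k) (w i)%:E * F i)%E.
Proof.
move=> w0 w1 hF.
have -> : x%:E = (\sum_(i < k) (w i)%:E * x%:E)%E.
  by rewrite sumEFin -mulr_suml w1 mul1r.
by apply: lee_sum => i _; apply: lee_wpmul2l; [rewrite lee_fin | exact: hF].
Qed.

Section Main.
Context (d : measure_display) (Z : measurableType d) (R : realType).
Context (D : probability Z R) (hstar : Z -> bool) (c_rew c_ver : R).
Hypothesis mA : measurable [set z | hstar z].
Variable p : R.
Hypothesis Dp : D [set z | hstar z] = p%:E.
Hypothesis p0 : 0 < p.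
Hypothesis p1 : p <= 1.
Hypothesis cr0 : 0 < c_rew.
Hypothesis cv0 : 0 < c_ver.

Definition haspos (h : seq (event Z)) := has hstar (pool h).

Lemma haspos_gen h z : haspos (rcons h (EGen z)) = hstar z || haspos h.
Proof. by rewrite /haspos pool_rcons /= has_rcons. Qed.

Lemma haspos_ver h j b : haspos (rcons h (EVer j b)) -> haspos h.
Proof.
rewrite /haspos pool_rcons /= has_cat => /orP[] /hasP[x xin hx]; apply/hasP; exists x => //.
  exact: mem_take xin.
exact: mem_drop xin.
Qed.

Lemma label_haspos h j : pool_label hstar h j -> haspos h.
Proof.
rewrite /pool_label; case E : (drop j (pool h)) => [|z t] // hz.
apply/hasP; exists z => //; by apply: (mem_drop (n0:=j)); rewrite E inE eqxx.
Qed.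

Let B := c_rew / p + c_ver.
Let m := Num.min c_rew c_ver.
Let rho := 1 - m / B.

Lemma B_gt0 : 0 < B. Proof. by rewrite /B addr_gt0 // divr_gt0. Qed.
Lemma Bp : B * p = c_rew + c_ver * p.
Proof. by rewrite /B mulrDl divfK // gt_eqF. Qed.
Lemma m_gt0 : 0 < m. Proof. by rewrite /m lt_min cr0 cv0. Qed.
Lemma m_le_rew : m <= c_rew. Proof. by rewrite /m ge_min lexx. Qed.
Lemma m_le_ver : m <= c_ver. Proof. by rewrite /m ge_min lexx orbT. Qed.
Lemma ver_le_B : c_ver <= B. Proof. by rewrite /B lerDr ltW // divr_gt0. Qed.
Lemma rew_le_B : c_rew <= B.
Proof.
rewrite /B; have : c_rew <= c_rew / p.
  by rewrite ler_pdivlMr // ler_piMr // ltW.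
move=> h; apply: (le_trans h); rewrite lerDl ltW //.
Qed.
Lemma rhoB : rho * B = B - m.
Proof. by rewrite /rho mulrBl mul1r divfK // gt_eqF // B_gt0. Qed.
Lemma rho_ge0 : 0 <= rho.
Proof.
rewrite /rho subr_ge0 ler_pdivrMr ?B_gt0 // mul1r.
exact: le_trans m_le_rew rew_le_B.
Qed.
Lemma rho_lt1 : rho < 1.
Proof. by rewrite /rho ltrBlDr ltrDl divr_gt0 // ?m_gt0 ?B_gt0. Qed.

Definition W n (b : bool) := if b then c_ver * (1 - rho ^+ n) else B * (1 - rho ^+ n).

Lemma W_ge0 n b : 0 <= W n b.
Proof.
have h : 0 <= 1 - rho ^+ n by rewrite subr_ge0 exprn_ile1 // ?rho_ge0 // ltW // rho_lt1.
by rewrite /W; case: b; rewrite mulr_ge0 // ltW // B_gt0.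
Qed.

Lemma W_le_ver n : W n true <= c_ver.
Proof.
rewrite /W; have := exprn_ge0 n rho_ge0; move: (rho ^+ n) => r r0. have := mulr_ge0 (ltW cv0) r0; lra.
Qed.


Lemma r_le1 n : rho ^+ n <= 1.
Proof. by rewrite exprn_ile1 // ?rho_ge0 // ltW // rho_lt1. Qed.

Lemma key_true r : 0 <= r -> r <= 1 -> c_ver * r * (1 - rho) <= c_rew.
Proof.
move=> r0 r1; rewrite /rho opprB addrCA subrr addr0.
have mB0 : 0 <= m / B by rewrite divr_ge0 // ltW ?m_gt0 ?B_gt0.
apply: (@le_trans _ _ (c_ver * (m / B))).
  by rewrite ler_wpM2r // ler_piMr // ltW.
apply: (@le_trans _ _ (B * (m / B))).
  by rewrite ler_wpM2r // ver_le_B.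
by rewrite mulrC divfK ?gt_eqF ?B_gt0 // m_le_rew.
Qed.

Lemma W_step_gen n b :
  W n.+1 b <= c_rew + W n true * p + W n b * (1 - p).
Proof.
rewrite /W exprSr; have := r_le1 n; have := exprn_ge0 n rho_ge0.
move: (rho ^+ n) => r r0 r1.
case: b.
- have := @key_true r r0 r1; lra.
- have rB : r * rho * B = r * B - r * m by rewrite -mulrA rhoB mulrBr.
  have bp : B * p * r = c_rew * r + c_ver * p * r by rewrite Bp; ring.
  have bp' := Bp.
  have hm : r * m <= r * c_rew by rewrite ler_wpM2l // m_le_rew.
  lra.
Qed.

Lemma W_step_ver n : W n.+1 false <= c_ver + W n false.
Proof.
rewrite /W exprSr; have := r_le1 n; have := exprn_ge0 n rho_ge0.
move: (rho ^+ n) => r r0 r1.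
have rB : r * rho * B = r * B - r * m by rewrite -mulrA rhoB mulrBr.
have hm : r * m <= c_ver.
  apply: (@le_trans _ _ m); last exact: m_le_ver.
  by rewrite ler_piMl // ltW // m_gt0.
lra.
Qed.


Lemma lower pol : valid_policy pol -> forall n h,
  ((W n (haspos h))%:E <= cost_upto D hstar c_rew c_ver pol n h)%E.
Proof.
move=> vp; elim=> [|n IH] h.
  by rewrite /= /W; case: haspos; rewrite expr0 subrr mulr0.
have [w0 [wz w1]] := vp h.
rewrite [cost_upto _ _ _ _ _ _ _]/=.
apply: sum_lb => // -[[|j] hi] /=.
- apply: (@le_trans _ _ ((c_rew + W n true * p + W n (haspos h) * (1 - p))%:E)).
    by rewrite lee_fin; exact: W_step_gen.
  rewrite -addrA EFinD leeD2l //  -(@int_if _ _ _ D hstar mA p Dp (W n true) (W n (haspos h))).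
  apply: int_mono => [z|z]; first by rewrite lee_fin; case: ifP => _; exact: W_ge0.
  have := IH (rcons h (EGen z)); rewrite haspos_gen.
  by case: (hstar z).
- case hl: (pool_label hstar h j).
    by rewrite (@label_haspos _ _ hl) lee_fin; exact: W_le_ver.
  apply: (@le_trans _ _ ((c_ver + W n (haspos (rcons h (EVer j false))))%:E)); last first.
    by rewrite EFinD leeD2l //.
  rewrite lee_fin; case hs: (haspos h).
    by apply: le_trans (W_le_ver n.+1) _; rewrite lerDl W_ge0.
  have -> : haspos (rcons h (EVer j false)) = false.
    by apply/negbTE/negP => /haspos_ver; rewrite hs.
  exact: W_step_ver.
Qed.


Lemma expected_lower pol : valid_policy pol ->
  (B%:E <= expected_cost D hstar c_rew c_ver pol)%E.
Proof.
move=> vp.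
have hn n : ((B * (1 - rho ^+ n))%:E <= expected_cost D hstar c_rew c_ver pol)%E.
  have := @lower pol vp n [::]; rewrite /W /= => H; apply: le_trans H _.
  by apply: ereal_sup_ubound; exists n.
have := hn 0%N; rewrite expr0 subrr mulr0.
case: (expected_cost D hstar c_rew c_ver pol) hn => [x| |] hn S0 //; last exact: leey.
rewrite lee_fin leNgt; apply/negP => xB.
have e0 : 0 < (B - x) / B by rewrite divr_gt0 ?B_gt0 // subr_gt0.
have [n hn'] := @small_pow _ rho _ rho_ge0 rho_lt1 e0.
have h1 : B * rho ^+ n < B - x.
  by rewrite -[X in _ < X](@divfK _ B) ?gt_eqF ?B_gt0 // mulrC ltr_pM2r ?B_gt0.
have := hn n; rewrite lee_fin; lra.
Qed.


Definition polstar : policy Z R := fun h i =>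
  if has hstar (pool h) then ((i == (find hstar (pool h)).+1)%:R)
  else ((i == 0%N)%:R).

Lemma polstar_valid : valid_policy polstar.
Proof.
move=> h; rewrite /polstar; case hp : (has hstar (pool h)); (split; first by move=> i; rewrite ler0n); split.
- move=> i hi; have /negPf -> // : i != (find hstar (pool h)).+1.
  apply/negP => /eqP ei; move: hi; rewrite ei ltnS leqNgt -has_find hp //.
- by apply: rsum_single; rewrite ltnS -has_find.
- by move=> i hi; have /negPf -> // : i != 0%N; rewrite -lt0n (leq_ltn_trans _ hi).
- exact: rsum_single.
Qed.

Definition Upos n := if n is 0%N then 0 else c_ver.
Fixpoint Uneg n := if n is n'.+1 then c_rew + Upos n' * p + Uneg n' * (1 - p) else 0.
Definition U n (b : bool) := if b then Upos n else Uneg n.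

Lemma cost_star n h :
  cost_upto D hstar c_rew c_ver polstar n h = (U n (haspos h))%:E.
Proof.
elim: n h => [|n IH] h; first by rewrite /U; case: haspos.
rewrite [cost_upto _ _ _ _ _ _ _]/= /polstar /U /haspos.
case hp : (has hstar (pool h)).
- have hk : ((find hstar (pool h)).+1 < (size (pool h)).+1)%N by rewrite ltnS -has_find.
  by rewrite (@esum_single _ _ _ _ hk) /= /pool_label drop_find.
- rewrite (@esum_single _ _ _ _ (ltn0Sn _)) /=.
  rewrite (@eq_integral _ _ _ _ setT (fun z => (if hstar z then Upos n else Uneg n)%:E)); last first.
    by move=> z _; rewrite IH haspos_gen /haspos hp orbF /U; case: hstar.
  by rewrite (@int_if _ _ _ D hstar mA p Dp) -EFinD addrA.
Qed.

Lemma U_bound n : Uneg n <= B /\ Upos n <= c_ver.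
Proof.
elim: n => [|n [IH1 IH2]] /=; first by split; [exact: ltW B_gt0 | exact: ltW].
split => //.
have h1 : Upos n * p <= c_ver * p by rewrite ler_wpM2r // ltW.
have h2 : Uneg n * (1 - p) <= B * (1 - p) by rewrite ler_wpM2r // subr_ge0.
have := Bp; lra.
Qed.

Lemma expected_upper : (expected_cost D hstar c_rew c_ver polstar <= B%:E)%E.
Proof.
apply: ge_ereal_sup => _ [n _ <-]; rewrite cost_star /= lee_fin.
by case: (U_bound n).
Qed.

Lemma Jstar_eq : Jstar D hstar c_rew c_ver = B%:E.
Proof.
apply/eqP; rewrite eq_le; apply/andP; split.
  apply: ge_ereal_inf; exists (expected_cost D hstar c_rew c_ver polstar).
    by exists polstar => //; exact: polstar_valid.
  exact: expected_upper.
apply: le_ereal_inf_tmp => _ [pol vp <-]; exact: expected_lower.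
Qed.

End Main.

Theorem lemma12 (d : measure_display) (Z : measurableType d) (R : realType)
  (H : set (Z -> bool)) (hstar : Z -> bool) (D : probability Z R)
  (c_rew c_ver : R) :
  hstar \in H ->
  measurable [set z | hstar z] ->
  (0 < D [set z | hstar z])%E ->
  0 < c_rew -> 0 < c_ver ->
  Jstar D hstar c_rew c_ver =
    (c_rew / fine (D [set z | hstar z]) + c_ver)%:E.
Proof.
move=> _ mA DA0 cr0 cv0.
have DA1 : (D [set z | hstar z] <= 1)%E by exact: probability_le1.
have fin : D [set z | hstar z] \is a fin_num.
  by rewrite ge0_fin_numE ?(ltW DA0) // (le_lt_trans DA1) // ltry.
have Dp : D [set z | hstar z] = (fine (D [set z | hstar z]))%:E by rewrite fineK.
have p0 : 0 < fine (D [set z | hstar z]) by rewrite -lte_fin -Dp.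
have p1 : fine (D [set z | hstar z]) <= 1 by rewrite -lee_fin -Dp.
exact: (@Jstar_eq _ _ _ D hstar c_rew c_ver mA _ Dp p0 p1 cr0 cv0).
Qed.
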